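(* Let $\Sigma$ be a pure unimodular fan of dimension two. Then $\Sigma$ is Ehrhart if and only if there exist integers $a_\rho\in\mathbb{Z}$, $\rho\in\Sigma(1)$, such that \[ \sum_{\sigma\in\Sigma(2),\ \rho\subseteq\sigma}u_{\sigma(1)\setminus\rho}=a_\rho u_\rho\quad\text{for all }\rho\in\Sigma(1), \qquad\text{and}\qquad \sum_{\rho\in\Sigma(1)}(2-a_\rho)u_\rho=0. \] Moreover, if $\Sigma$ is Ehrhart, then for every $f\in\mathrm{PL}(\Sigma)$, \[ \chi_\Sigma([f])=1+\sum_{\rho\in\Sigma(1)}\Big(1-\frac{a_\rho}{2}\Big)f(u_\rho)+\sum_{\substack{\sigma\in\Sigma(2)\\ \sigma(1)=\{\rho_1,\rho_2\}}}f(u_{\rho_1})f(u_{\rho_2})-\sum_{\rho\in\Sigma(1)}\frac{a_\rho}{2}f(u_\rho)^2. \]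
   Context: $N$ is a free abelian group, $N_\mathbb{R}=N\otimes\mathbb{R}$, $M=\mathrm{Hom}(N,\mathbb{Z})$ viewed as integral linear functions. A fan is pure if all inclusion-maximal cones have the same dimension; unimodular if it contains the origin and for each cone the primitive ray generators $u_\rho\in N$ extend to a $\mathbb{Z}$-basis of $N$. $u_{\sigma(1)\setminus\rho}$ denotes the primitive generator of the ray of $\sigma$ other than $\rho$. $\mathrm{PL}(\Sigma)$: functions on $|\Sigma|$ agreeing on each cone with some element of $M$; $\underline{\mathrm{PL}}(\Sigma)$ its quotient by restrictions of elements of $M$. Courant function $\delta_\rho$: $1$ at $u_\rho$, $0$ at other ray generators. Star fan $\Sigma^\sigma$: image in $N_\mathbb{R}/\mathrm{span}(\sigma)$ (lattice $N/\mathrm{Span}_\mathbb{Z}(\sigma\cap N)$) of all cones that are faces of cones containing $\sigma$; $[f]^\sigma$ is the class of the function induced by $f-m$, $m\in M$ agreeing with $f$ on $\sigma$. A unimodular fan $\Sigma$ is Ehrhart (recursively on dimension) if (1) $\Sigma^\rho$ is Ehrhart for every ray $\rho$, and (2) there is $\chi_\Sigma:\underline{\mathrm{PL}}(\Sigma)\to\mathbb{Z}$ with $\chi_\Sigma(0)=1$ and $\chi_\Sigma([f])=\chi_\Sigma([f-\delta_\rho])+\chi_{\Sigma^\rho}([f]^\rho)$ for all $f\in\mathrm{PL}(\Sigma)$, $\rho\in\Sigma(1)$. Zero-dimensional fans are Ehrhart with $\chi=1$; such $\chi_\Sigma$ is unique (the Ehrhart polynomial). *)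

(* Defs.v *)
(* N = Z^d is modelled as 'rV[int]_d, N_R = R^d as 'rV[R]_d
   with R the real numbers (Stdlib R, a realType via Rstruct), and
   M = Hom(N,Z) as integer row vectors acting by the dot product. *)
From HB Require Import structures.
From mathcomp Require Import all_boot all_order all_algebra.
From mathcomp Require Import finmap.
From mathcomp Require Import Rstruct.
Set Implicit Arguments. Unset Strict Implicit. Unset Printing Implicit Defensive.
Import Order.TTheory GRing.Theory Num.Theory.
Local Open Scope ring_scope.
Local Open Scope fset_scope.

Notation RR := Rdefinitions.R.

Section Fans.
Variable d : nat.

Notation vecN := 'rV[int]_d.
(* a (simplicial) cone is given by its set of ray generators,
   a fan by its set of cones *)
Notation cone := {fset vecN}.
Notation fan := {fset {fset vecN}}.

Definition embed (u : vecN) : 'rV[RR]_d := map_mx intr u.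

Definition mdot (m u : vecN) : int := \sum_(i < d) m 0 i * u 0 i.
Definition pair (m : vecN) (x : 'rV[RR]_d) : RR :=
  \sum_(i < d) (m 0 i)%:~R * x 0 i.

Definition in_cone (S : cone) (x : 'rV[RR]_d) : Prop :=
  exists c : vecN -> RR, (forall u, u \in S -> 0 <= c u) /\
    x = \sum_(u <- S) c u *: embed u.

Definition extends_to_basis (S : cone) : Prop :=
  exists B : 'M[int]_d, B \in unitmx /\ forall u, u \in S -> exists i, row i B = u.

(* unimodular fan: contains the origin, closed under faces (faces of a
   simplicial cone = subsets of its generators), two cones meet in a common
   face, and the generators of every cone extend to a Z-basis *)
Definition unimodular_fan (F : fan) : Prop :=
  [/\ fset0 \in F,
      forall S T : cone, S \in F -> T `<=` S -> T \in F,
      forall S T : cone, S \in F -> T \in F ->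
        forall x, (in_cone S x /\ in_cone T x) <-> in_cone (S `&` T) x
    & forall S : cone, S \in F -> extends_to_basis S].

Definition pure_dim2 (F : fan) : Prop :=
  forall S : cone, S \in F -> (forall T : cone, T \in F -> S `<=` T -> T = S) ->
    #|` S| = 2%N.

Definition rays (F : fan) : {fset vecN} :=
  [fset u in \bigcup_(S <- F) S | [fset u] \in F].

(* The star fan F^sigma (sigma in F) is represented by the
   pair (F, sigma): its cones are the images of the cones tau of F containing
   sigma, its lattice is N / Span(sigma), its dual lattice is
   {m in M | m vanishes on sigma}, and a function on its support is
   represented by a function g on N_R, only its values on the cones
   tau ⊇ sigma mattering.  (F^sigma)^rho = F^(sigma ∪ rho). ---- *)

Definition vanishes_on (m : vecN) (sigma : cone) : Prop :=
  forall v, v \in sigma -> mdot m v = 0.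

Definition in_star (F : fan) (sigma : cone) (x : 'rV[RR]_d) : Prop :=
  exists tau : cone, [/\ tau \in F, sigma `<=` tau & in_cone tau x].

Definition PLrel (F : fan) (sigma : cone) (g : 'rV[RR]_d -> RR) : Prop :=
  forall tau : cone, tau \in F -> sigma `<=` tau ->
    exists m : vecN, vanishes_on m sigma /\
      forall x, in_cone tau x -> g x = pair m x.

Definition PLeq (F : fan) (sigma : cone) (g g' : 'rV[RR]_d -> RR) : Prop :=
  exists m : vecN, vanishes_on m sigma /\
    forall x, in_star F sigma x -> g x - g' x = pair m x.

(* u generates a ray of F^sigma (namely the image of the ray of u) *)
Definition star_ray (F : fan) (sigma : cone) (u : vecN) : Prop :=
  u \notin sigma /\ (u |` sigma) \in F.

Definition courant (F : fan) (sigma : cone) (u : vecN)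
    (delta : 'rV[RR]_d -> RR) : Prop :=
  [/\ PLrel F sigma delta, delta (embed u) = 1 &
      forall v, star_ray F sigma v -> v <> u -> delta (embed v) = 0].

Definition zerofun : 'rV[RR]_d -> RR := fun _ => 0.

(* EP n sigma chi : chi is an Ehrhart function of F^sigma, i.e. F^sigma is
   Ehrhart (in the recursive sense) with chi_{F^sigma} = chi; chi is a map
   on representatives that is well defined on classes.  n is a fuel bound
   on the dimension of F^sigma (dimension 0 at fuel 0). *)
Fixpoint EP (F : fan) (n : nat) (sigma : cone)
    (chi : ('rV[RR]_d -> RR) -> int) : Prop :=
  let wd := (forall g g', PLrel F sigma g -> PLrel F sigma g' ->
               PLeq F sigma g g' -> chi g = chi g') /\ chi zerofun = 1 in
  match n with
  | 0%N => wd /\ (forall u, ~ star_ray F sigma u)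
  | n'.+1 => [/\ wd,
      forall u, star_ray F sigma u -> exists chi', EP F n' (u |` sigma) chi'
      &
      forall u chi', star_ray F sigma u -> EP F n' (u |` sigma) chi' ->
        forall f delta, PLrel F sigma f -> courant F sigma u delta ->
        forall m : vecN, vanishes_on m sigma ->
          (forall x, in_cone (u |` sigma) x -> f x = pair m x) ->
          (chi f = chi (fun x => f x - delta x) + chi' (fun x => f x - pair m x))%R]
  end.

(* chi is the Ehrhart polynomial chi_F of F (cones have at most d rays,
   so fuel d suffices) *)
Definition ehrhart_poly (F : fan) (chi : ('rV[RR]_d -> RR) -> int) : Prop :=
  EP F d fset0 chi.

Definition ehrhart (F : fan) : Prop := exists chi, ehrhart_poly F chi.

Definition PL (F : fan) (f : 'rV[RR]_d -> RR) : Prop := PLrel F fset0 f.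

End Fans.

(* Main.v *)
Require Import Defs.
From HB Require Import structures.
From mathcomp Require Import all_boot all_order all_algebra.
From mathcomp Require Import finmap.
From mathcomp Require Import Rstruct.
From mathcomp Require Import ring lra.
From Stdlib Require Import Classical_Prop ClassicalEpsilon FunctionalExtensionality.
Set Implicit Arguments. Unset Strict Implicit. Unset Printing Implicit Defensive.
Import Order.TTheory GRing.Theory Num.Theory.
Local Open Scope ring_scope.
Local Open Scope fset_scope.
Local Open Scope ring_scope.

Section Basics.
Variable d : nat.
Notation vecN := 'rV[int]_d.
Notation vecR := 'rV[RR]_d.

Lemma pair0x x : pair (0 : vecN) x = 0.
Proof. by rewrite /pair big1 // => i _; rewrite mxE mul0r. Qed.

Lemma pairx0 (m : vecN) : pair m 0 = 0.
Proof. by rewrite /pair big1 // => i _; rewrite mxE mulr0. Qed.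

Lemma pairD (m : vecN) x y : pair m (x + y) = pair m x + pair m y.
Proof. by rewrite /pair -big_split; apply: eq_bigr => i _; rewrite mxE mulrDr. Qed.

Lemma pairZ (m : vecN) c x : pair m (c *: x) = c * pair m x.
Proof. by rewrite /pair big_distrr; apply: eq_bigr => i _; rewrite mxE mulrCA. Qed.

Lemma pairB (m m' : vecN) (z : int) x :
  pair (m - z *: m') x = pair m x - z%:~R * pair m' x.
Proof.
rewrite /pair big_distrr -sumrB; apply: eq_bigr => i _.
by rewrite !mxE intrD intrN intrM mulrDl mulNr /= mulrA.
Qed.

Lemma pairN (m : vecN) x : pair (- m) x = - pair m x.
Proof.
rewrite /pair -sumrN; apply: eq_bigr => i _.
by rewrite !mxE intrN mulNr.
Qed.

Lemma mdot_embed (m u : vecN) : pair m (embed u) = (mdot m u)%:~R.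
Proof.
rewrite /pair /mdot rmorph_sum; apply: eq_bigr => i _.
by rewrite /embed mxE rmorphM.
Qed.

Lemma mdot0 (m : vecN) : mdot m 0 = 0.
Proof. by rewrite /mdot big1 // => i _; rewrite mxE mulr0. Qed.

Lemma mdotD (m u v : vecN) : mdot m (u + v) = mdot m u + mdot m v.
Proof. by rewrite /mdot -big_split; apply: eq_bigr => i _; rewrite mxE mulrDr. Qed.

Lemma mdotZ (m u : vecN) a : mdot m (a *: u) = a * mdot m u.
Proof. by rewrite /mdot big_distrr; apply: eq_bigr => i _; rewrite mxE mulrCA. Qed.

Lemma mdot_sum (m : vecN) I (r : seq I) (P : pred I) (G : I -> vecN) :
  mdot m (\sum_(i <- r | P i) G i) = \sum_(i <- r | P i) mdot m (G i).
Proof. exact: (big_morph (mdot m) (mdotD m) (mdot0 m)). Qed.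

Lemma pair_sum (m : vecN) (s : seq vecN) (c : vecN -> RR) :
  pair m (\sum_(u <- s) c u *: embed u) = \sum_(u <- s) c u * (mdot m u)%:~R.
Proof.
elim: s => [|u s IH]; first by rewrite !big_nil pairx0.
by rewrite !big_cons pairD pairZ IH mdot_embed.
Qed.

Lemma pair_cone (S : {fset vecN}) (m m' : vecN) x :
  in_cone S x -> (forall u, u \in S -> mdot m u = mdot m' u) ->
  pair m x = pair m' x.
Proof.
move=> [c [_ ->]] H; rewrite !pair_sum big_seq [RHS]big_seq.
by apply: eq_bigr => u uS; rewrite H.
Qed.

Lemma in_cone_gen (S : {fset vecN}) u : u \in S -> in_cone S (embed u).
Proof.
move=> uS; exists (fun v => (v == u)%:R); split.
  by move=> v _; case: (v == u).
rewrite (bigD1_seq u) //= ?fset_uniq // eqxx scale1r big1 ?addr0 //.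
by move=> v /negbTE ->; rewrite scale0r.
Qed.

Lemma mdot0l (u : vecN) : mdot 0 u = 0.
Proof. by rewrite /mdot big1 // => i _; rewrite mxE mul0r. Qed.

Lemma mdotN (m u : vecN) : mdot m (- u) = - mdot m u.
Proof. by rewrite /mdot -sumrN; apply: eq_bigr => i _; rewrite mxE mulrN. Qed.

Lemma mdotB1 (m m' u : vecN) (z : int) : mdot (m - z *: m') u = mdot m u - z * mdot m' u.
Proof.
rewrite /mdot big_distrr -sumrB; apply: eq_bigr => i _.
by rewrite !mxE mulrDl mulNr /= mulrA.
Qed.

End Basics.


Section Lin.
Variable d : nat.
Notation vecN := 'rV[int]_d.

Lemma mdot_col (C : 'M[int]_d) j (w : vecN) : mdot (col j C)^T w = (w *m C) 0 j.
Proof. by rewrite /mdot !mxE; apply: eq_bigr => i _; rewrite !mxE mulrC. Qed.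

Lemma row_inv (B : 'M[int]_d) i j : B \in unitmx ->
  (row i B *m invmx B) 0 j = (i == j)%:R.
Proof. by move=> HB; rewrite -row_mul mulmxV // !mxE. Qed.

Lemma basis_dual (S : {fset vecN}) v : extends_to_basis S -> v \in S ->
  exists m, mdot m v = 1 /\ forall w, w \in S -> w != v -> mdot m w = 0.
Proof.
move=> [B [HB HS]] vS; have [j Hj] := HS v vS.
exists (col j (invmx B))^T; split; first by rewrite mdot_col -Hj row_inv // eqxx.
move=> w wS wv; have [i Hi] := HS w wS.
rewrite mdot_col -Hi row_inv //; case: eqP => // eij.
by move: wv; rewrite -Hi -Hj eij eqxx.
Qed.

Lemma basis_coef (S : {fset vecN}) u s : extends_to_basis S -> u \in S ->
  (forall m, mdot m u = 0 -> mdot m s = 0) -> exists a, s = a *: u.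
Proof.
move=> [B [HB HS]] uS Hm; have [j Hj] := HS u uS.
exists ((s *m invmx B) 0 j).
have E : s = (s *m invmx B) *m B by rewrite -mulmxA mulVmx // mulmx1.
rewrite {1}E mulmx_sum_row (bigD1 j) //= Hj big1 ?addr0 // => k kj.
have := Hm (col k (invmx B))^T; rewrite !mdot_col -Hj row_inv // eq_sym (negbTE kj).
by move=> /(_ erefl) ->; rewrite scale0r.
Qed.

Lemma vec_zero (t : vecN) : (forall m, mdot m t = 0) -> t = 0.
Proof.
move=> H; apply/matrixP => i k; rewrite (ord1 i) mxE.
have := H (col k 1%:M)^T; rewrite mdot_col mulmx1 => ->; done.
Qed.

End Lin.


Section Fan.
Variable d : nat.
Notation vecN := 'rV[int]_d.
Notation fn := ('rV[RR]_d -> RR).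
Notation z0 := (@zerofun d).
Variable F : {fset {fset vecN}}.
Hypothesis HU : unimodular_fan F.
Hypothesis HP : pure_dim2 F.

Lemma face S T : S \in F -> T `<=` S -> T \in F.
Proof. by case: HU => _ H _ _; apply: H. Qed.

Lemma basisF S : S \in F -> extends_to_basis S.
Proof. by case: HU => _ _ _ H; apply: H. Qed.

Lemma cone_int S T x : S \in F -> T \in F -> in_cone S x -> in_cone T x ->
  in_cone (S `&` T) x.
Proof. by case: HU => _ _ H _ SF TF h1 h2; apply/(H S T SF TF x). Qed.

Lemma max_above S : S \in F -> exists T, [/\ T \in F, S `<=` T &
  forall T', T' \in F -> T `<=` T' -> T' = T].
Proof.
pose bd := (\max_(T <- F) #|` T|)%N.
have bdP T : T \in F -> (#|` T| <= bd)%N by move=> TF; apply: (leq_bigmax_seq _ TF).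
suff H : forall n S, S \in F -> (bd - #|` S| < n)%N -> exists T, [/\ T \in F, S `<=` T &
  forall T', T' \in F -> T `<=` T' -> T' = T].
  by move=> SF; apply: (H (bd - #|` S|).+1 S SF).
elim=> [//|n IH] S0 SF lt.
case: (classic (forall T', T' \in F -> S0 `<=` T' -> T' = S0)) => [H|H].
  by exists S0; split.
have [T' [T'F sT' neT']] : exists T', [/\ T' \in F, S0 `<=` T' & T' <> S0].
  apply: NNPP => H'; apply: H => T' T'F sT'; apply: NNPP => ne.
  by apply: H'; exists T'.
have ltc : (#|` S0| < #|` T'|)%N.
  apply: fproper_ltn_card; rewrite fproperEneq sT' andbT.
  by apply/eqP => E; apply: neT'; rewrite E.
have [T [TF sT HT]] := IH T' T'F (leq_trans (ltn_sub2l (leq_trans ltc (bdP _ T'F)) ltc) lt).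
by exists T; split => //; apply: fsubset_trans sT.
Qed.

Lemma card_le2 S : S \in F -> (#|` S| <= 2)%N.
Proof.
move=> SF; have [T [TF sT HT]] := max_above SF.
by rewrite -(HP TF HT); apply: fsubset_leq_card.
Qed.

Lemma cone_eq S T : S \in F -> #|` S| = 2%N -> T \in F -> S `<=` T -> T = S.
Proof.
move=> SF cS TF sT; apply/eqP; rewrite eq_sym eqEfcard sT cS.
exact: card_le2.
Qed.

Lemma no_star2 S w : S \in F -> #|` S| = 2%N -> ~ star_ray F S w.
Proof.
move=> SF cS [wS wSF]; have := card_le2 wSF.
by rewrite cardfsU1 wS cS.
Qed.


Lemma EP_wd n sigma chi : EP F n sigma chi ->
  (forall g g', PLrel F sigma g -> PLrel F sigma g' -> PLeq F sigma g g' -> chi g = chi g')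
  /\ chi z0 = 1.
Proof. by case: n => [|n] /= []. Qed.

Lemma EP_const1 S n : S \in F -> #|` S| = 2%N -> EP F n S (fun _ => 1).
Proof.
move=> SF cS; case: n => [|n] /=.
  by split=> // u; apply: no_star2.
by split=> // [u /(no_star2 SF cS)|u chi' /(no_star2 SF cS)].
Qed.

Lemma chi_two S n chi g : S \in F -> #|` S| = 2%N -> EP F n S chi ->
  (forall x, in_cone S x -> g x = 0) -> chi g = 1.
Proof.
move=> SF cS /EP_wd [wd ch0] Hg; rewrite -ch0; apply: wd.
- move=> T TF sT; exists 0; split; first by move=> v _; rewrite mdot0l.
  by rewrite (cone_eq SF cS TF sT) => x /Hg ->; rewrite pair0x.
- move=> T TF sT; exists 0; split; first by move=> v _; rewrite mdot0l.
  by move=> x _; rewrite pair0x.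
- exists 0; split; first by move=> v _; rewrite mdot0l.
  move=> x [T [TF sT]]; rewrite (cone_eq SF cS TF sT) => /Hg ->.
  by rewrite /zerofun subr0 pair0x.
Qed.

Lemma PL_int sigma g T w : PLrel F sigma g -> T \in F -> sigma `<=` T -> w \in T ->
  exists z : int, g (embed w) = z%:~R.
Proof.
move=> Hg TF sT wT; have [m [_ Hm]] := Hg T TF sT.
by exists (mdot m w); rewrite Hm ?mdot_embed //; apply: in_cone_gen.
Qed.

Lemma PLrel_lin sigma g h (z : int) : PLrel F sigma g -> PLrel F sigma h ->
  PLrel F sigma (fun x => g x - z%:~R * h x).
Proof.
move=> Hg Hh T TF sT; have [m [vm Hm]] := Hg T TF sT; have [m' [vm' Hm']] := Hh T TF sT.
exists (m - z *: m'); split.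
  by move=> v vs; rewrite mdotB1 vm // vm' // mulr0 subr0.
by move=> x xT; rewrite pairB Hm // Hm'.
Qed.

Lemma PLrelB sigma g h : PLrel F sigma g -> PLrel F sigma h ->
  PLrel F sigma (fun x => g x - h x).
Proof.
move=> Hg Hh; have := PLrel_lin 1 Hg Hh.
have -> // : (fun x => g x - (1%:~R : RR) * h x) = (fun x => g x - h x).
by apply: functional_extensionality => x; rewrite mul1r.
Qed.

Lemma PLrel_pair sigma m : vanishes_on m sigma -> PLrel F sigma (pair m).
Proof. by move=> vm T _ _; exists m. Qed.

Lemma PLrel0 sigma : PLrel F sigma z0.
Proof.
move=> T _ _; exists 0; split; first by move=> v _; rewrite mdot0l.
by move=> x _; rewrite pair0x.
Qed.


Lemma courant_exists sigma v : v \notin sigma -> (v |` sigma) \in F ->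
  exists delta, courant F sigma v delta.
Proof.
move=> vsig vsF.
have Hmm : forall T : {fset vecN}, exists m : vecN, T \in F -> v \in T ->
    mdot m v = 1 /\ (forall w, w \in T -> w != v -> mdot m w = 0).
  move=> T; case: (boolP (T \in F)) => TF; last by exists 0.
  case: (boolP (v \in T)) => vT; last by exists 0.
  by have [m Hm] := basis_dual (basisF TF) vT; exists m.
pose mm T := proj1_sig (constructive_indefinite_description _ (Hmm T)).
have mmP T : T \in F -> v \in T ->
    mdot (mm T) v = 1 /\ (forall w, w \in T -> w != v -> mdot (mm T) w = 0).
  exact: (proj2_sig (constructive_indefinite_description _ (Hmm T))).
pose delta x := match excluded_middle_informative
   (exists T, [/\ T \in F, v \in T & in_cone T x]) with
  | left h => pair (mm (proj1_sig (constructive_indefinite_description _ h))) x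
  | right _ => 0 end.
have key T x : T \in F -> in_cone T x -> delta x = pair (if v \in T then mm T else 0) x.
  move=> TF xT; rewrite /delta; case: excluded_middle_informative => [h|h].
    case: (constructive_indefinite_description _ h) => /= T' [T'F vT' xT'].
    have xI := cone_int T'F TF xT' xT.
    apply: (pair_cone xI) => w; rewrite in_fsetI => /andP[wT' wT].
    have [m1 m0] := mmP T' T'F vT'.
    case: ifP => vT.
      have [n1 n0] := mmP T TF vT.
      case: (eqVneq w v) => [->|wv]; first by rewrite m1 n1.
      by rewrite m0 // n0.
    rewrite mdot0l m0 //; apply/eqP => wv; by rewrite -wv wT in vT.
  case: ifP => vT; last by rewrite pair0x.
  by exfalso; apply: h; exists T.
exists delta; split.
- move=> T TF sT; exists (if v \in T then mm T else 0); split.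
    move=> w ws; case: ifP => vT; last exact: mdot0l.
    have [_ m0] := mmP T TF vT; apply: m0; first exact: (fsubsetP sT).
    by apply/eqP => wv; move: ws; rewrite wv (negbTE vsig).
  by move=> x xT; rewrite (key T x TF xT).
- rewrite (key (v |` sigma) _ vsF); last by apply: in_cone_gen; rewrite fset1U1.
  have [m1 _] := mmP _ vsF (fset1U1 _ _).
  by rewrite fset1U1 mdot_embed m1.
- move=> w [ws wsF] wv.
  rewrite (key (w |` sigma) _ wsF); last by apply: in_cone_gen; rewrite fset1U1.
  case: ifP => H; last by rewrite pair0x.
  exfalso; move: H; rewrite in_fset1U => /orP[/eqP E|]; first by apply: wv.
  by rewrite (negbTE vsig).
Qed.

Lemma in_bigcup S w : S \in F -> w \in S -> w \in \bigcup_(T <- F) T.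
Proof. by move=> SF wS; apply/bigfcupP; exists S => //; rewrite SF. Qed.

Lemma uniq_gen sigma (chi : fn -> int) (Phi : fn -> RR) :
  (forall g g', PLrel F sigma g -> PLrel F sigma g' -> PLeq F sigma g g' -> chi g = chi g') ->
  (forall g g', (forall w, star_ray F sigma w -> g (embed w) = g' (embed w)) -> Phi g = Phi g') ->
  (forall g w delta, PLrel F sigma g -> star_ray F sigma w -> courant F sigma w delta ->
     (chi g)%:~R - Phi g = (chi (fun x => g x - delta x))%:~R - Phi (fun x => g x - delta x)) ->
  forall g, PLrel F sigma g -> (chi g)%:~R - Phi g = (chi z0)%:~R - Phi z0.
Proof.
move=> wd loc step.
pose E g := (chi g)%:~R - Phi g.
have iter w delta : star_ray F sigma w -> courant F sigma w delta -> forall (z : int) g,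
    PLrel F sigma g -> E g = E (fun x => g x - z%:~R * delta x).
  move=> sw cd; have [Hd _ _] := cd.
  have A n g : PLrel F sigma g -> E g = E (fun x => g x - (n%:Z)%:~R * delta x).
    elim: n g => [|n IH] g Hg.
      congr E; apply: functional_extensionality => x; by rewrite mul0r subr0.
    rewrite IH //; rewrite /E (step _ w delta) //; last exact: PLrel_lin.
    have -> // : (fun x => g x - (n%:Z)%:~R * delta x - delta x) =
                 (fun x => g x - (n.+1%:Z)%:~R * delta x).
    apply: functional_extensionality => x.
    by rewrite -[n.+1]addn1 PoszD intrD; ring.
  have B n g : PLrel F sigma g -> E g = E (fun x => g x - (- n%:Z)%:~R * delta x).
    elim: n g => [|n IH] g Hg.
      congr E; apply: functional_extensionality => x; by rewrite mul0r subr0.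
    rewrite IH //.
    have HgS : PLrel F sigma (fun x => g x - (- (n.+1%:Z))%:~R * delta x) by exact: PLrel_lin.
    rewrite /E (step _ w delta HgS) //.
    have -> // : (fun x => g x - (- (n.+1%:Z))%:~R * delta x - delta x) =
                 (fun x => g x - (- (n%:Z))%:~R * delta x).
    apply: functional_extensionality => x.
    by rewrite -[n.+1]addn1 PoszD !intrN intrD; ring.
  move=> z g Hg; case: z => n; first exact: A.
  by rewrite NegzE; apply: B.
have claim : forall (s : seq vecN) g, PLrel F sigma g ->
    (forall w, star_ray F sigma w -> w \notin s -> g (embed w) = 0) -> E g = E z0.
  elim=> [|w s IH] g Hg Hv.
    rewrite /E (loc g z0); last by move=> w sw; rewrite Hv.
    congr (_ - _); congr intr; apply: wd => //; first exact: PLrel0.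
    exists 0; split; first by move=> v _; rewrite mdot0l.
    move=> x [T [TF sT xT]]; have [m [vm Hm]] := Hg T TF sT.
    rewrite Hm // /zerofun subr0 (pair_cone (m' := 0) xT) // => u uT.
    rewrite mdot0l; case: (boolP (u \in sigma)) => us; first exact: vm.
    have su : star_ray F sigma u.
      split => //; apply: (face TF); apply/fsubsetP => y; rewrite in_fset1U.
      by case/orP => [/eqP ->|]; [|apply: (fsubsetP sT)].
    apply/eqP; rewrite -(intr_eq0 RR) -mdot_embed -Hm ?Hv //; last exact: in_cone_gen.
  case: (classic (star_ray F sigma w)) => [sw|nsw]; last first.
    apply: IH => // w0 sw0 w0s; apply: Hv => //; rewrite in_cons negb_or w0s andbT.
    by apply/eqP => E0; apply: nsw; rewrite -E0.
  have [ws wsF] := sw.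
  have [z Hz] := PL_int Hg wsF (fsubsetU1 _ _) (fset1U1 _ _).
  have [delta cd] := courant_exists ws wsF.
  rewrite (iter w delta sw cd z g Hg); apply: IH; first by apply: PLrel_lin => //; case: cd.
  move=> w0 sw0 w0s; case: (eqVneq w0 w) => [->|ne].
    by case: cd => _ -> _; rewrite Hz mulr1 subrr.
  case: cd => _ _ ->; rewrite ?mulr0 ?subr0 //; last exact/eqP.
  by apply: Hv; rewrite // in_cons negb_or ne.
move=> g Hg; apply: (claim (\bigcup_(T <- F) T)) => // w [ws wsF].
by rewrite (in_bigcup wsF (fset1U1 _ _)).
Qed.
End Fan.


Section One.
Variable d : nat.
Notation vecN := 'rV[int]_d.
Notation fn := ('rV[RR]_d -> RR).
Notation z0 := (@zerofun d).
Variable F : {fset {fset vecN}}.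
Hypothesis HU : unimodular_fan F.
Hypothesis HP : pure_dim2 F.

Definition Psi (u : vecN) (g : fn) : RR :=
  1 + \sum_(S <- F | (#|` S| == 2)%N && (u \in S)) \sum_(w <- S | w != u) g (embed w).

Definition nsum (u : vecN) : vecN :=
  \sum_(S <- F | (#|` S| == 2)%N && (u \in S)) \sum_(w <- S | w != u) w.

Lemma two_split (S : {fset vecN}) u : #|` S| = 2%N -> u \in S ->
  exists p, p != u /\ S = p |` [fset u].
Proof.
move=> cS uS.
have : (0 < #|` S `\ u|)%N by move: cS; rewrite (cardfsD1 u) uS; case: (#|` S `\ u|).
rewrite cardfs_gt0 => /fset0Pn [p]; rewrite in_fsetD1 => /andP[pu pS].
exists p; split => //; apply/eqP; rewrite eq_sym eqEfcard cS cardfsU1 in_fset1 pu cardfs1 andbT.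
by apply/fsubsetP => y; rewrite in_fset1U in_fset1 => /orP[] /eqP ->.
Qed.

Lemma sum_pair (p u : vecN) (G : vecN -> RR) : p != u ->
  \sum_(w <- p |` [fset u] | w != u) G w = G p.
Proof.
move=> pu; rewrite big_mkcond big_fsetU1 ?in_fset1 // big_seq_fset1 /=.
by rewrite pu eqxx addr0.
Qed.

Lemma nbr_star S u w : S \in F -> #|` S| = 2%N -> u \in S -> w \in S -> w != u ->
  star_ray F [fset u] w.
Proof.
move=> SF cS uS wS wu; have [p [pu ES]] := two_split cS uS.
split; first by rewrite in_fset1.
suff -> : w |` [fset u] = S by [].
by move: wS; rewrite ES in_fset1U in_fset1 (negbTE wu) orbF => /eqP ->.
Qed.

Lemma Psi_local u g g' : (forall w, star_ray F [fset u] w -> g (embed w) = g' (embed w)) ->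
  Psi u g = Psi u g'.
Proof.
move=> H; congr (_ + _); rewrite big_seq_cond [RHS]big_seq_cond; apply: eq_bigr => S.
case/andP => SF /andP[/eqP cS uS]; rewrite big_seq_cond [RHS]big_seq_cond.
by apply: eq_bigr => w /andP[wS wu]; rewrite H //; apply: (nbr_star SF).
Qed.

Lemma Psi0 u : Psi u z0 = 1.
Proof. by rewrite /Psi big1 ?addr0 // => S _; rewrite big1. Qed.

Lemma Psi_pair u m : Psi u (pair m) = 1 + (mdot m (nsum u))%:~R.
Proof.
rewrite /Psi /nsum mdot_sum rmorph_sum; congr (_ + _); apply: eq_bigr => S _.
by rewrite mdot_sum rmorph_sum; apply: eq_bigr => w _; rewrite mdot_embed.
Qed.

Lemma Psi_courant u v g delta : star_ray F [fset u] v -> courant F [fset u] v delta ->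
  Psi u (fun x => g x - delta x) = Psi u g - 1.
Proof.
move=> [vu vuF] [_ dv dw].
have cT : #|` v |` [fset u]| = 2%N by rewrite cardfsU1 vu cardfs1.
rewrite /Psi.
have -> : \sum_(S <- F | (#|` S| == 2)%N && (u \in S)) \sum_(w <- S | w != u) (g (embed w) - delta (embed w))
  = \sum_(S <- F | (#|` S| == 2)%N && (u \in S)) \sum_(w <- S | w != u) g (embed w)
  - \sum_(S <- F | (#|` S| == 2)%N && (u \in S)) (S == v |` [fset u])%:R.
  rewrite -sumrB big_seq_cond [RHS]big_seq_cond; apply: eq_bigr => S.
  case/andP => SF /andP[/eqP cS uS]; rewrite sumrB; congr (_ - _).
  have [p [pu ES]] := two_split cS uS; rewrite ES sum_pair //.
  have sp : star_ray F [fset u] p by apply: (nbr_star SF) => //; rewrite ES fset1U1.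
  case: (eqVneq p v) => [->|pv]; first by rewrite dv eqxx.
  rewrite dw //; last exact/eqP.
  case: eqP => // E; move: pv; have : p \in v |` [fset u] by rewrite -E fset1U1.
  by rewrite in_fset1U in_fset1 (negbTE pu) orbF => ->.
rewrite (big_mkcond _ (fun S => (S == v |` [fset u])%:R)) (bigD1_seq (v |` [fset u])) ?fset_uniq //=.
rewrite cT !eqxx !inE eqxx orbT /= [\sum_(i <- F | i != _) _]big1 ?addr0; first by rewrite addrA.
move=> S /negbTE ->; by case: ifP.
Qed.


Lemma star1_card u w : star_ray F [fset u] w -> #|` w |` [fset u]| = 2%N.
Proof. by case=> wu _; rewrite cardfsU1 wu cardfs1. Qed.

Lemma EP1_uniq u n chi : EP F n.+1 [fset u] chi ->
  forall g, PLrel F [fset u] g -> (chi g)%:~R = Psi u g.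
Proof.
move=> [[wd ch0] ex rec] g Hg.
have step : forall g0 w delta, PLrel F [fset u] g0 -> star_ray F [fset u] w ->
    courant F [fset u] w delta ->
    (chi g0)%:~R - Psi u g0 = (chi (fun x => g0 x - delta x))%:~R - Psi u (fun x => g0 x - delta x).
  move=> g0 w delta Hg0 sw cd.
  have [wu wuF] := sw.
  have [m [vm Hm]] := Hg0 _ wuF (fsubsetU1 _ _).
  have [chi'' EP''] := ex w sw.
  rewrite (rec w chi'' sw EP'' g0 delta Hg0 cd m vm Hm).
  rewrite (chi_two HP wuF (star1_card sw) EP''); last by move=> x xT; rewrite Hm // subrr.
  rewrite (Psi_courant g0 sw cd) intrD; ring.
have := uniq_gen HU (Phi := Psi u) wd (@Psi_local u) step Hg.
rewrite ch0 Psi0 subrr => H.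
by apply/eqP; rewrite -subr_eq0 H.
Qed.

Lemma EP1_exists u a n : [fset u] \in F -> nsum u = a *: u ->
  EP F n.+1 [fset u] (fun g => Num.floor (Psi u g)).
Proof.
move=> uF Hs; split.
- split; last by rewrite Psi0 floor1.
  move=> g g' Hg Hg' [m [vm Hm]]; congr Num.floor.
  have -> : Psi u g = Psi u (fun x => g' x + pair m x).
    apply: Psi_local => w [wu wuF]; rewrite -Hm; first by ring.
    by exists (w |` [fset u]); split => //; [apply: fsubsetU1 | apply: in_cone_gen; rewrite fset1U1].
  rewrite /Psi; congr (_ + _).
  under eq_bigr do rewrite big_split /=.
  rewrite big_split /=.
  have -> : \sum_(S <- F | (#|` S| == 2)%N && (u \in S)) \sum_(w <- S | w != u) pair m (embed w) = 0.
    have := Psi_pair u m; rewrite /Psi => /addrI ->.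
    by rewrite Hs mdotZ vm ?in_fset1 // mulr0.
  by rewrite addr0.
- move=> w sw; exists (fun _ => 1); apply: (EP_const1 HP) => //; first by case: sw.
  exact: star1_card.
- move=> w chi'' sw EP'' g delta Hg cd m vm Hm.
  have [wu wuF] := sw.
  rewrite (chi_two HP wuF (star1_card sw) EP''); last by move=> x xT; rewrite Hm // subrr.
  rewrite (Psi_courant g sw cd).
  have E : Psi u g = (Psi u g - 1) + 1 by ring.
  by rewrite {1}E floorDrz ?int_num1 // floor1.
Qed.
End One.


Lemma ord_ne_ge2 n (i j : 'I_n) : i != j -> (2 <= n)%N.
Proof.
case: n i j => [[]//|[|n]] i j; last by [].
by rewrite (ord1 i) (ord1 j) eqxx.
Qed.

Section Two.
Variable d : nat.
Notation vecN := 'rV[int]_d.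
Notation fn := ('rV[RR]_d -> RR).
Notation z0 := (@zerofun d).
Variable F : {fset {fset vecN}}.
Hypothesis HU : unimodular_fan F.
Hypothesis HP : pure_dim2 F.

Lemma raysP w : w \in rays F = (w \in \bigcup_(S <- F) S) && ([fset w] \in F).
Proof. by rewrite /rays !inE. Qed.

Lemma ray_of S w : S \in F -> w \in S -> w \in rays F.
Proof.
move=> SF wS; rewrite raysP (in_bigcup SF wS) /=.
by apply: (face HU SF); rewrite fsub1set.
Qed.

Lemma ray1 w : w \in rays F -> [fset w] \in F.
Proof. by rewrite raysP => /andP[]. Qed.

Lemma two_elems (S : {fset vecN}) : #|` S| = 2%N ->
  exists p q, p != q /\ S = p |` [fset q].
Proof.
move=> cS; have : (0 < #|` S|)%N by rewrite cS.
rewrite cardfs_gt0 => /fset0Pn [q qS].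
by have [p [pq ES]] := two_split cS qS; exists p, q.
Qed.

Lemma sum_pair2 (p q : vecN) (G : vecN -> RR) : p != q ->
  \sum_(w <- p |` [fset q]) G w = G p + G q.
Proof. by move=> pq; rewrite big_fsetU1 ?in_fset1 // big_seq_fset1. Qed.

Lemma prod_pair2 (p q : vecN) (G : vecN -> RR) : p != q ->
  \prod_(w <- p |` [fset q]) G w = G p * G q.
Proof. by move=> pq; rewrite big_fsetU1 ?in_fset1 // big_seq_fset1. Qed.

Lemma sum_pairl (p q : vecN) (G : vecN -> RR) : p != q ->
  \sum_(w <- p |` [fset q] | w != p) G w = G q.
Proof.
move=> pq; rewrite big_mkcond big_fsetU1 ?in_fset1 // big_seq_fset1 /=.
by rewrite eqxx eq_sym pq add0r.
Qed.

Definition Phi (a : vecN -> int) (f : fn) : RR :=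
  1 + \sum_(u <- rays F) (1 - (a u)%:~R / 2) * f (embed u)
    + \sum_(S <- F | #|` S| == 2%N) \prod_(v <- S) f (embed v)
    - \sum_(u <- rays F) ((a u)%:~R / 2) * f (embed u) ^+ 2.

Lemma Phi_local a g g' : (forall w, [fset w] \in F -> g (embed w) = g' (embed w)) ->
  Phi a g = Phi a g'.
Proof.
move=> H; rewrite /Phi.
have Hr : forall w, w \in rays F -> g (embed w) = g' (embed w) by move=> w /ray1; apply: H.
congr (_ + _ + _ - _).
- by rewrite big_seq [RHS]big_seq; apply: eq_bigr => w /Hr ->.
- rewrite big_seq_cond [RHS]big_seq_cond; apply: eq_bigr => S /andP[SF _].
  rewrite big_seq [RHS]big_seq; apply: eq_bigr => w wS.
  by rewrite Hr //; apply: (ray_of SF).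
- by rewrite big_seq [RHS]big_seq; apply: eq_bigr => w /Hr ->.
Qed.

Lemma Phi0 a : Phi a z0 = 1.
Proof.
rewrite /Phi /zerofun !big1 ?addr0 ?subr0 //.
- by move=> w _; rewrite expr2 !mulr0.
- move=> S /eqP /two_elems [p [q [pq ->]]]; by rewrite prod_pair2 // mulr0.
- by move=> w _; rewrite mulr0.
Qed.


Lemma sum_ind (s : seq vecN) u (c : vecN -> RR) : uniq s -> u \in s ->
  \sum_(w <- s) c w * (w == u)%:R = c u.
Proof.
move=> us uin; rewrite (bigD1_seq u) //= eqxx mulr1 big1 ?addr0 //.
by move=> w /negbTE ->; rewrite mulr0.
Qed.

Lemma courant0_val u delta : courant F fset0 u delta -> forall w, [fset w] \in F ->
  delta (embed w) = (w == u)%:R.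
Proof.
move=> [_ du dw] w wF; case: (eqVneq w u) => [->|wu]; first by rewrite du.
rewrite dw //; last exact/eqP.
by split; [rewrite in_fset0 | rewrite fsetU0].
Qed.

Lemma Psi_sub u g h : Psi F u (fun x => g x - h x) = Psi F u g - (Psi F u h - 1).
Proof.
rewrite /Psi; under eq_bigr => S _ do rewrite sumrB.
rewrite sumrB; ring.
Qed.

Lemma Phi_step a u delta g m : nsum F u = a u *: u -> [fset u] \in F ->
  courant F fset0 u delta -> g (embed u) = pair m (embed u) ->
  Phi a g = Phi a (fun x => g x - delta x) + Psi F u (fun x => g x - pair m x).
Proof.
move=> Hs uF cd gu.
have Ev w : [fset w] \in F -> g (embed w) - delta (embed w) = g (embed w) - (w == u)%:R.
  by move=> wF; rewrite (courant0_val cd wF).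
have ur : u \in rays F by apply: (ray_of uF); rewrite in_fset1.
have T1 : \sum_(w <- rays F) (1 - (a w)%:~R / 2) * (g (embed w) - delta (embed w)) =
    \sum_(w <- rays F) (1 - (a w)%:~R / 2) * g (embed w) - (1 - (a u)%:~R / 2).
  rewrite big_seq; under eq_bigr => w wr do rewrite (Ev w (ray1 wr)) mulrBr.
  by rewrite -big_seq sumrB sum_ind ?fset_uniq.
have T3 : \sum_(w <- rays F) ((a w)%:~R / 2) * (g (embed w) - delta (embed w)) ^+ 2 =
    \sum_(w <- rays F) ((a w)%:~R / 2) * g (embed w) ^+ 2
    - ((a u)%:~R / 2) * (2 * g (embed u) - 1).
  rewrite big_seq.
  under eq_bigr => w wr.
    rewrite (Ev w (ray1 wr)).
    have -> : (a w)%:~R / 2 * (g (embed w) - (w == u)%:R) ^+ 2 =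
       (a w)%:~R / 2 * g (embed w) ^+ 2 - ((a w)%:~R / 2 * (2 * g (embed w) - 1)) * (w == u)%:R.
      by case: (w == u); rewrite /= ?mulr1 ?mulr0 ?subr0; ring.
    over.
  by rewrite -big_seq sumrB sum_ind ?fset_uniq.
have T2 : \sum_(S <- F | #|` S| == 2%N) \prod_(v <- S) (g (embed v) - delta (embed v)) =
    \sum_(S <- F | #|` S| == 2%N) \prod_(v <- S) g (embed v)
    - \sum_(S <- F | (#|` S| == 2)%N && (u \in S)) \sum_(w <- S | w != u) g (embed w).
  rewrite big_mkcondr -sumrB big_seq_cond [RHS]big_seq_cond; apply: eq_bigr => S /andP[SF /eqP cS].
  have [p [q [pq ES]]] := two_elems cS.
  have pF : [fset p] \in F by apply: ray1; apply: (ray_of SF); rewrite ES fset1U1.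
  have qF : [fset q] \in F by apply: ray1; apply: (ray_of SF); rewrite ES !inE eqxx orbT.
  rewrite ES !prod_pair2 // (Ev p pF) (Ev q qF) in_fset1U in_fset1.
  case: (eqVneq p u) => [Epu|pu].
    by rewrite -Epu sum_pairl // (eq_sym q p) (negbTE pq) /=; ring.
  case: (eqVneq q u) => [Equ|qu].
    by rewrite -Equ sum_pair //=; ring.
  by rewrite /=; ring.
have TP : Psi F u (fun x => g x - pair m x) =
    1 + \sum_(S <- F | (#|` S| == 2)%N && (u \in S)) \sum_(w <- S | w != u) g (embed w)
    - (a u)%:~R * g (embed u).
  rewrite Psi_sub Psi_pair Hs mdotZ intrM -mdot_embed -gu /Psi; ring.
by rewrite /Phi T1 T2 T3 TP; field.
Qed.

Lemma sum_nsum u m : \sum_(S <- F | (#|` S| == 2)%N && (u \in S)) \sum_(w <- S | w != u)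
    ((mdot m w)%:~R : RR) = (mdot m (nsum F u))%:~R.
Proof.
rewrite /nsum mdot_sum rmorph_sum; apply: eq_bigr => S _.
by rewrite mdot_sum rmorph_sum.
Qed.

Lemma exch (h : vecN -> {fset vecN} -> RR) :
  \sum_(S <- F | #|` S| == 2%N) \sum_(u <- S) h u S =
  \sum_(u <- rays F) \sum_(S <- F | (#|` S| == 2)%N && (u \in S)) h u S.
Proof.
under [RHS]eq_bigr => u _ do rewrite big_mkcondr.
rewrite exchange_big big_seq_cond [RHS]big_seq_cond; apply: eq_bigr => S /andP[SF _].
transitivity (\sum_(u <- S) (if u \in S then h u S else 0)); first by apply: eq_big_seq => u ->.
apply: big_fset_incl; last by move=> x _ /negbTE ->.
by apply/fsubsetP => x; apply: ray_of.
Qed.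

Lemma Phi_shift a g m : (forall u, u \in rays F -> nsum F u = a u *: u) ->
  \sum_(u <- rays F) (2 - a u) *: u = 0 ->
  Phi a (fun x => g x + pair m x) = Phi a g.
Proof.
move=> H1 H2.
pose p w : RR := (mdot m w)%:~R.
have T1 : \sum_(w <- rays F) (1 - (a w)%:~R / 2) * (g (embed w) + pair m (embed w)) =
    \sum_(w <- rays F) (1 - (a w)%:~R / 2) * g (embed w)
    + \sum_(w <- rays F) (1 - (a w)%:~R / 2) * p w.
  by rewrite -big_split; apply: eq_bigr => w _; rewrite mdot_embed mulrDr.
have T3 : \sum_(w <- rays F) ((a w)%:~R / 2) * (g (embed w) + pair m (embed w)) ^+ 2 =
    \sum_(w <- rays F) ((a w)%:~R / 2) * g (embed w) ^+ 2
    + \sum_(w <- rays F) ((a w)%:~R / 2) * (2 * g (embed w) * p w + p w ^+ 2).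
  by rewrite -big_split; apply: eq_bigr => w _ /=; rewrite mdot_embed /p; ring.
have T2 : \sum_(S <- F | #|` S| == 2%N) \prod_(v <- S) (g (embed v) + pair m (embed v)) =
    \sum_(S <- F | #|` S| == 2%N) \prod_(v <- S) g (embed v)
    + \sum_(S <- F | #|` S| == 2%N) \sum_(u <- S)
        ((g (embed u) + p u / 2) * \sum_(w <- S | w != u) p w).
  rewrite -big_split; apply: eq_bigr => S /eqP cS /=.
  have [q [r [qr ES]]] := two_elems cS.
  rewrite ES !prod_pair2 // sum_pair2 // sum_pairl // sum_pair // !mdot_embed /p.
  by field.
have X : \sum_(S <- F | #|` S| == 2%N) \sum_(u <- S)
        ((g (embed u) + p u / 2) * \sum_(w <- S | w != u) p w) =
    \sum_(u <- rays F) (g (embed u) + p u / 2) * ((a u)%:~R * p u).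
  rewrite exch big_seq [RHS]big_seq; apply: eq_bigr => u ur.
  by rewrite -big_distrr /= sum_nsum H1 // mdotZ intrM.
have K : \sum_(w <- rays F) (1 - (a w)%:~R / 2) * p w
    + \sum_(u <- rays F) (g (embed u) + p u / 2) * ((a u)%:~R * p u)
    - \sum_(w <- rays F) ((a w)%:~R / 2) * (2 * g (embed w) * p w + p w ^+ 2) = 0.
  transitivity (((mdot m (\sum_(u <- rays F) (2 - a u) *: u))%:~R : RR) / 2);
    last by rewrite H2 mdot0 mul0r.
  rewrite mdot_sum rmorph_sum mulr_suml.
  rewrite -big_split -sumrB; apply: eq_bigr => w _ /=.
  by rewrite mdotZ intrM intrB /p; field.
rewrite /Phi /= T1 T2 T3 X.
move: K; set A := \sum_(w <- rays F) _; set B := \sum_(w <- rays F) _; lra.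
Qed.
End Two.


Section Main.
Variable d : nat.
Notation vecN := 'rV[int]_d.
Notation fn := ('rV[RR]_d -> RR).
Notation z0 := (@zerofun d).
Variable F : {fset {fset vecN}}.
Hypothesis HU : unimodular_fan F.
Hypothesis HP : pure_dim2 F.

Lemma star0P w : star_ray F fset0 w <-> [fset w] \in F.
Proof.
split; first by case=> _; rewrite fsetU0.
by move=> wF; split; [rewrite in_fset0 | rewrite fsetU0].
Qed.

Lemma int_of_eq (m n : int) : (m%:~R : RR) = n%:~R -> m = n.
Proof. by move=> H; apply/eqP; rewrite -(eqr_int RR); apply/eqP. Qed.

Lemma PL_shift g w m : PLrel F fset0 g ->
  (forall x, in_cone (w |` fset0) x -> g x = pair m x) ->
  PLrel F [fset w] (fun x => g x - pair m x).
Proof.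
move=> Hg Hm T TF sT; have [mT [_ HmT]] := Hg T TF (fsub0set _).
have wT : w \in T by rewrite -fsub1set.
exists (mT - 1 *: m); split.
  move=> v; rewrite in_fset1 => /eqP ->; rewrite mdotB1 mul1r; apply/eqP; rewrite subr_eq0; apply/eqP.
  apply: int_of_eq; rewrite -!mdot_embed -HmT; last exact: in_cone_gen.
  by rewrite Hm //; apply: in_cone_gen; rewrite fset1U1.
by move=> x xT; rewrite pairB HmT // mul1r.
Qed.

Lemma dim_ge2 : (2 <= d)%N.
Proof.
have F0 : fset0 \in F by case: HU.
have [T [TF _ HT]] := max_above F0.
have [p [q [pq ET]]] := two_elems (HP TF HT).
have [B [HB HS]] := basisF HU TF.
have [i Hi] := HS p ltac:(by rewrite ET fset1U1).
have [j Hj] := HS q ltac:(by rewrite ET !inE eqxx orbT).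
apply: (ord_ne_ge2 (i := i) (j := j)); apply: contra pq => /eqP eij.
by rewrite -Hi -Hj eij.
Qed.


Lemma chi_eq_Phi_n a chi n : (forall u, u \in rays F -> nsum F u = a u *: u) ->
  (2 <= n)%N -> EP F n fset0 chi -> forall f, PL F f -> (chi f)%:~R = Phi F a f.
Proof.
move=> H1; case: n => [|[|n]] // _ [[wd ch0] ex rec] f Hf.
have loc : forall g g', (forall w, star_ray F fset0 w -> g (embed w) = g' (embed w)) ->
    Phi F a g = Phi F a g'.
  by move=> g g' H; apply: (Phi_local HU) => w /star0P; apply: H.
have step : forall g w delta, PLrel F fset0 g -> star_ray F fset0 w -> courant F fset0 w delta ->
    (chi g)%:~R - Phi F a g = (chi (fun x => g x - delta x))%:~R - Phi F a (fun x => g x - delta x).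
  move=> g w delta Hg sw cd.
  have wF := (star0P w).1 sw.
  have [m [vm Hm]] := Hg _ sw.2 (fsub0set _).
  have [chi' EP'] := ex w sw.
  rewrite (rec w chi' sw EP' g delta Hg cd m vm Hm) intrD.
  have EP1 : EP F n.+1 [fset w] chi' by rewrite fsetU0 in EP'.
  rewrite (EP1_uniq HU HP EP1 (PL_shift Hg Hm)).
  have gw : g (embed w) = pair m (embed w) by apply: Hm; apply: in_cone_gen; rewrite fset1U1.
  rewrite (Phi_step HU (H1 w (ray_of HU wF (fset11 w))) wF cd gw); ring.
have := uniq_gen HU wd loc step Hf.
rewrite ch0 Phi0 subrr => H.
by apply/eqP; rewrite -subr_eq0 H.
Qed.

Lemma Phi_pair_diff a m :
  Phi F a (pair m) - Phi F a (pair (- m)) = (mdot m (\sum_(u <- rays F) (2 - a u) *: u))%:~R.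
Proof.
have Q : \sum_(w <- rays F) ((a w)%:~R / 2) * pair (- m) (embed w) ^+ 2 =
    \sum_(w <- rays F) ((a w)%:~R / 2) * pair m (embed w) ^+ 2.
  by apply: eq_bigr => w _; rewrite pairN sqrrN.
have P : \sum_(S <- F | #|` S| == 2%N) \prod_(v <- S) pair (- m) (embed v) =
    \sum_(S <- F | #|` S| == 2%N) \prod_(v <- S) pair m (embed v).
  apply: eq_bigr => S /eqP /two_elems [p [q [pq ->]]].
  by rewrite !prod_pair2 // !pairN mulrNN.
have L : \sum_(w <- rays F) (1 - (a w)%:~R / 2) * pair (- m) (embed w) =
    - \sum_(w <- rays F) (1 - (a w)%:~R / 2) * pair m (embed w).
  by rewrite -sumrN; apply: eq_bigr => w _; rewrite pairN mulrN.
have R : ((mdot m (\sum_(u <- rays F) (2 - a u) *: u))%:~R : RR) =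
    2 * \sum_(w <- rays F) (1 - (a w)%:~R / 2) * pair m (embed w).
  rewrite mdot_sum rmorph_sum mulr_sumr; apply: eq_bigr => w _.
  by rewrite mdotZ /= rmorphM rmorphB /= mdot_embed; field.
rewrite /Phi Q P L R.
set A := \sum_(w <- rays F) _; set B := \sum_(w <- rays F) _; set C := \sum_(S <- F | _) _.
lra.
Qed.

Lemma ehr_cond_n chi n : (2 <= n)%N -> EP F n fset0 chi ->
  exists a, (forall u, u \in rays F -> nsum F u = a u *: u) /\
            \sum_(u <- rays F) (2 - a u) *: u = 0.
Proof.
case: n => [|[|n]] // _ Hchi.
have [[wd ch0] ex rec] := Hchi.
have Ha : forall u, exists z : int, u \in rays F -> nsum F u = z *: u.
  move=> u; case: (boolP (u \in rays F)) => ur; last by exists 0.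
  have uF := ray1 ur.
  have [chi' EP'] := ex u ((star0P u).2 uF).
  have EP1 : EP F n.+1 [fset u] chi' by rewrite fsetU0 in EP'.
  have [[wd' ch0'] _ _] := EP1.
  suff [z Hz] : exists z, nsum F u = z *: u by exists z.
  apply: (basis_coef (basisF HU uF) (fset11 u)) => m mu.
  have vm : vanishes_on m [fset u] by move=> v; rewrite in_fset1 => /eqP ->.
  have E := EP1_uniq HU HP EP1 (@PLrel_pair _ F _ _ vm).
  have W : chi' (pair m) = chi' z0.
    apply: wd'; [exact: (@PLrel_pair _ F _ _ vm) | exact: (@PLrel0 _ F _) |].
    by exists m; split => // x _; rewrite /zerofun subr0.
  rewrite W ch0' Psi_pair in E.
  apply: int_of_eq; move: E; rewrite mulr1z; lra.
pose a u := proj1_sig (constructive_indefinite_description _ (Ha u)).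
have H1 : forall u, u \in rays F -> nsum F u = a u *: u.
  by move=> u; exact: (proj2_sig (constructive_indefinite_description _ (Ha u))).
exists a; split => //.
apply: vec_zero => m.
have Hp m' : Phi F a (pair m') = 1.
  have vm : vanishes_on m' fset0 by move=> v; rewrite in_fset0.
  rewrite -(chi_eq_Phi_n H1 (isT : (2 <= n.+2)%N) Hchi (@PLrel_pair _ F _ _ vm)).
  have W : chi (pair m') = chi z0.
    apply: wd; [exact: (@PLrel_pair _ F _ _ vm) | exact: (@PLrel0 _ F _) |].
    by exists m'; split => // x _; rewrite /zerofun subr0.
  by rewrite W ch0.
have := Phi_pair_diff a m; rewrite !Hp subrr => E.
by apply: int_of_eq; rewrite -E.
Qed.

Lemma cond_ehr_n a n : (forall u, u \in rays F -> nsum F u = a u *: u) ->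
  \sum_(u <- rays F) (2 - a u) *: u = 0 -> (2 <= n)%N ->
  EP F n fset0 (fun f => Num.floor (Phi F a f)).
Proof.
move=> H1 H2; case: n => [|[|n]] // _; split.
- split; last by rewrite Phi0 floor1.
  move=> g g' Hg Hg' [m [_ Hm]]; congr Num.floor.
  rewrite -(Phi_shift HU g' m H1 H2); apply: (Phi_local HU) => w wF.
  rewrite -Hm; first by ring.
  by exists [fset w]; split; [exact: wF | apply: fsub0set | apply: in_cone_gen; rewrite fset11].
- move=> u su; exists (fun g => Num.floor (Psi F u g)); rewrite fsetU0.
  have uF := (star0P u).1 su.
  exact: (@EP1_exists _ F HP u (a u) n uF (H1 u (ray_of HU uF (fset11 u)))).
- move=> u chi' su EP' f delta Hf cd m vm Hm.
  have uF := (star0P u).1 su.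
  have EP1 : EP F n.+1 [fset u] chi' by rewrite fsetU0 in EP'.
  have E1 := EP1_uniq HU HP EP1 (PL_shift Hf Hm).
  have fu : f (embed u) = pair m (embed u) by apply: Hm; apply: in_cone_gen; rewrite fset1U1.
  rewrite (Phi_step HU (H1 u (ray_of HU uF (fset11 u))) uF cd fu) -E1.
  by rewrite floorDrz ?intr_int // intrKfloor.
Qed.
End Main.


Local Open Scope ring_scope.
Local Open Scope fset_scope.

Theorem proposition3 (d : nat) (F : {fset {fset 'rV[int]_d}}) :
  unimodular_fan F -> pure_dim2 F ->
  let cond (a : 'rV[int]_d -> int) :=
    (forall u, u \in rays F ->
       \sum_(S <- F | (#|` S| == 2)%N && (u \in S)) \sum_(v <- S | v != u) v
         = a u *: u)
    /\ \sum_(u <- rays F) (2 - a u) *: u = 0 in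
  (ehrhart F <-> exists a, cond a) /\
  (forall a, cond a -> forall chi, ehrhart_poly F chi ->
   forall f, PL F f ->
     (chi f)%:~R =
       1 + \sum_(u <- rays F) (1 - (a u)%:~R / 2) * f (embed u)
         + \sum_(S <- F | #|` S| == 2%N) \prod_(v <- S) f (embed v)
         - \sum_(u <- rays F) ((a u)%:~R / 2) * f (embed u) ^+ 2 :> RR).
Proof.
move=> HU HP cond; split; first split.
- move=> [chi Hchi]; exact: (ehr_cond_n HU HP (dim_ge2 HU HP) Hchi).
- move=> [a [H1 H2]]; exists (fun f => Num.floor (Phi F a f)).
  exact: (cond_ehr_n HU HP H1 H2 (dim_ge2 HU HP)).
- move=> a [H1 H2] chi Hchi f Hf.
  exact: (chi_eq_Phi_n HU HP H1 (dim_ge2 HU HP) Hchi Hf).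
Qed.
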